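(* For any metrized graph $\Gamma$ with $v \geq 4$ vertices, $$(v-1)\,y(\Gamma) \leq Kf(\Gamma) \leq \frac{v^2-3v+4}{2}\, y(\Gamma).$$
   Context: A metrized graph $\Gamma$ is a finite connected graph (multiple edges and self-loops allowed) each of whose edges is identified with a closed segment of positive length, with a finite nonempty vertex set $V(\Gamma)$ containing every point of valence $\neq2$; $v=\#V(\Gamma)$, $E(\Gamma)$ its edge set, $L_i$ the length of $e_i$, $r(x,y)$ the effective resistance (edges as resistors of resistance equal to length). $Kf(\Gamma)=\frac12\sum_{p,q\in V(\Gamma)}r(p,q)$. For an edge $e_i$ with end points $p_i,q_i$: if $\Gamma-e_i$ (interior deleted) is connected, $R_i$ is the effective resistance between $p_i,q_i$ in $\Gamma-e_i$, $R_{a_i,p}=\hat j_{p_i}(p,q_i)$, $R_{b_i,p}=\hat j_{q_i}(p,p_i)$ with $\hat j_z(x,y)$ the voltage function of $\Gamma-e_i$ (potential at $x$ when unit current enters at $y$, exits at $z$, potential $0$ at $z$); if $e_i$ is a bridge, $R_{a_i,p}=0,R_{b_i,p}=R_i$ for $p$ in the component of $\Gamma-e_i$ containing $p_i$ and $R_{a_i,p}=R_i,R_{b_i,p}=0$ otherwise, expressions in $R_i$ being interpreted as limits as $R_i\to\infty$; for a self-loop $R_i=0$. For a fixed vertex $p$ (independent of choice), $y(\Gamma)=\frac14\sum_{e_i}\frac{L_iR_i^2}{(L_i+R_i)^2}+\frac34\sum_{e_i}\frac{L_i(R_{a_i,p}-R_{b_i,p})^2}{(L_i+R_i)^2}$.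 *)

(* Defs.v *)
From HB Require Import structures.
From mathcomp Require Import all_boot all_order all_algebra.
From mathcomp Require Import reals.
Set Implicit Arguments. Unset Strict Implicit. Unset Printing Implicit Defensive.
Import Order.TTheory GRing.Theory Num.Theory.
Local Open Scope ring_scope.

(* A metrized graph with vertex set 'I_n and edges 'I_m: edge k has end
   points pe k, qe k (possibly equal: self-loop) and length L k > 0.
   Sub-graphs obtained by deleting (interiors of) edges are described by a
   predicate [keep : 'I_m -> bool] selecting the retained edges. *)

Section MetrizedGraph.
Variables (R : realType) (n m : nat).
Variables (pe qe : 'I_m -> 'I_n) (L : 'I_m -> R).

Definition adjG (keep : 'I_m -> bool) : rel 'I_n :=
  fun x y => [exists k, keep k &&
     (((pe k == x) && (qe k == y)) || ((pe k == y) && (qe k == x)))].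

Definition connectedG (keep : 'I_m -> bool) : bool :=
  [forall x : 'I_n, [forall y : 'I_n, connect (adjG keep) x y]].

(* weighted Laplacian, conductance 1/L k on edge k (self-loops contribute 0) *)
Definition laplacian (keep : 'I_m -> bool) : 'M[R]_n :=
  \matrix_(i, j) \sum_(k | keep k)
     (L k)^-1 * (((pe k == i)%:R - (qe k == i)%:R) *
                 ((pe k == j)%:R - (qe k == j)%:R)).

Definition grounded_lap (keep : 'I_m -> bool) (z : 'I_n) : 'M[R]_n :=
  \matrix_(i, j) if (i == z) || (j == z) then (i == j)%:R
                 else laplacian keep i j.

(* potential vector when unit current enters at y and exits at z,
   potential 0 at z (Kirchhoff's laws at every vertex other than z) *)
Definition voltage (keep : 'I_m -> bool) (z y : 'I_n) : 'cV[R]_n :=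
  invmx (grounded_lap keep z) *m
    \col_i ((i != z) && (i == y))%:R.

Definition jhat (keep : 'I_m -> bool) (z x y : 'I_n) : R :=
  voltage keep z y x ord0.

Definition resistance (keep : 'I_m -> bool) (x y : 'I_n) : R :=
  jhat keep y x x.

Definition allE : 'I_m -> bool := fun _ => true.
Definition minus_edge (k : 'I_m) : 'I_m -> bool := fun j => j != k.

Definition Kf : R :=
  2^-1 * \sum_(x : 'I_n) \sum_(y : 'I_n) resistance allE x y.

(* contribution of edge k to y(Gamma), with base vertex p.
   If Gamma - e_k is disconnected (bridge), the value is the limit
   R_k -> oo of the expression, namely L_k/4 + 3 L_k/4 = L_k. *)
Definition yterm (p : 'I_n) (k : 'I_m) : R :=
  if connectedG (minus_edge k) then
    let Rk := resistance (minus_edge k) (pe k) (qe k) in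
    let Ra := jhat (minus_edge k) (pe k) p (qe k) in
    let Rb := jhat (minus_edge k) (qe k) p (pe k) in
    4^-1 * (L k * Rk ^+ 2 / (L k + Rk) ^+ 2)
      + 3 / 4 * (L k * (Ra - Rb) ^+ 2 / (L k + Rk) ^+ 2)
  else L k.

Definition yG (p : 'I_n) : R := \sum_(k : 'I_m) yterm p k.

End MetrizedGraph.

(* Main.v *)
Require Import Defs.
From HB Require Import structures.
From mathcomp Require Import all_boot all_order all_algebra.
From mathcomp Require Import reals.
From mathcomp Require Import ring lra.
Set Implicit Arguments. Unset Strict Implicit. Unset Printing Implicit Defensive.
Import Order.TTheory GRing.Theory Num.Theory.
Local Open Scope ring_scope.

Section Ineq.
Variables (R : realType) (n : nat).

Lemma split2 (i j : 'I_n) (f : 'I_n -> R) : i != j ->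
  \sum_x f x = f i + f j + \sum_(x | (x != i) && (x != j)) f x.
Proof.
move=> ij; rewrite (bigD1 i) //= (bigD1 j) /=; last by rewrite eq_sym.
by rewrite addrA.
Qed.

Lemma pair_sum (g : 'I_n -> R) :
  \sum_x \sum_y (g x - g y) ^+ 2 =
  2 * (n%:R * \sum_x g x ^+ 2 - (\sum_x g x) ^+ 2).
Proof.
have E x : \sum_y (g x - g y) ^+ 2 =
    n%:R * g x ^+ 2 - 2 * g x * \sum_y g y + \sum_y g y ^+ 2.
  rewrite (_ : \sum_y (g x - g y) ^+ 2 = \sum_y (g x ^+ 2 - 2 * g x * g y + g y ^+ 2)).
    by rewrite big_split sumrB /= sumr_const card_ord -big_distrr /= -[g x ^+ 2 *+ n]mulr_natl.
  by apply: eq_bigr => y _; ring.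
under eq_bigr do rewrite E.
rewrite big_split sumrB /= -big_distrr -big_distrl /= -big_distrr /=.
rewrite sumr_const card_ord -mulr_natl; ring.
Qed.

Lemma cs_restr (i j : 'I_n) (g : 'I_n -> R) : (2 < n)%N -> i != j ->
  (\sum_(x | (x != i) && (x != j)) g x) ^+ 2 <=
  (n%:R - 2) * \sum_(x | (x != i) && (x != j)) g x ^+ 2.
Proof.
move=> n2 ij.
set P := fun x : 'I_n => (x != i) && (x != j).
have C : \sum_(x | P x) (1 : R) = n%:R - 2.
  have := split2 (fun _ => (1 : R)) ij; rewrite sumr_const card_ord => ->.
  ring.
set S1 := \sum_(x | P x) g x; set S2 := \sum_(x | P x) g x ^+ 2.
set c := n%:R - 2 : R.
have H0 : 0 <= \sum_(x | P x) (c * g x - S1) ^+ 2 by apply: sumr_ge0 => x _; apply: sqr_ge0.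
have E : \sum_(x | P x) (c * g x - S1) ^+ 2 =
    c ^+ 2 * S2 - 2 * c * S1 * S1 + S1 ^+ 2 * \sum_(x | P x) 1.
  rewrite (_ : \sum_(x | P x) (c * g x - S1) ^+ 2 =
    \sum_(x | P x) (c ^+ 2 * g x ^+ 2 - 2 * c * S1 * g x + S1 ^+ 2 * 1)).
    by rewrite big_split sumrB /= -!big_distrr.
  by apply: eq_bigr => x _; ring.
rewrite C -/c in E.
rewrite E in H0.
have c0 : 0 < c.
  by rewrite /c subr_gt0 ltr_nat.
have : 0 <= c * (c * S2 - S1 ^+ 2) by move: H0; congr (_ <= _); ring.
by rewrite pmulr_rge0 // subr_ge0.
Qed.


Lemma edge_ineq (g : 'I_n -> R) rho (i j : 'I_n) : (4 <= n)%N ->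
  (forall x, - rho <= g x <= rho) ->
  (i != j /\ g i = rho /\ g j = - rho) \/ rho = 0 ->
  (n%:R - 1) * (rho ^+ 2 + 3 / n%:R * \sum_x g x ^+ 2) <=
     n%:R * \sum_x g x ^+ 2 - (\sum_x g x) ^+ 2 /\
  n%:R * \sum_x g x ^+ 2 - (\sum_x g x) ^+ 2 <=
     (n%:R ^+ 2 - 3 * n%:R + 4) / 2 * (rho ^+ 2 + 3 / n%:R * \sum_x g x ^+ 2).
Proof.
move=> n4 Hb Hij.
set N := n%:R : R.
have N4 : 4 <= N by rewrite /N ler_nat.
have rho0 : 0 <= rho by have := Hb i; case/andP => ? ?; lra.
set A := \sum_x g x ^+ 2; set B := \sum_x g x.
have A0 : 0 <= A by apply: sumr_ge0 => x _; apply: sqr_ge0.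
have AN : A <= N * rho ^+ 2.
  have -> : N * rho ^+ 2 = \sum_(x < n) rho ^+ 2 by rewrite sumr_const card_ord mulr_natl.
  apply: ler_sum => x _.
  by have := Hb x; case/andP => ? ?; nra.
have KB : B ^+ 2 <= (N - 2) * (A - 2 * rho ^+ 2).
  case: Hij => [[ij [gi gj]] | r0].
    have n2 : (2 < n)%N by apply: leq_trans n4.
    have := cs_restr g n2 ij.
    rewrite /A /B (split2 _ ij) (split2 (fun x => g x ^+ 2) ij) gi gj.
    set S1 := \sum_(x | _) _; set S2 := \sum_(x | _) _.
    move=> H; rewrite (_ : rho + - rho + S1 = S1); last by ring.
    by rewrite (_ : rho ^+ 2 + (- rho) ^+ 2 + S2 - 2 * rho ^+ 2 = S2); [|ring].
  have g0 x : g x = 0 by have := Hb x; rewrite r0 oppr0 => /andP [? ?]; lra.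
  rewrite /A /B !big1 ?r0 => [|x _|x _]; rewrite ?g0; try ring.
  by rewrite expr0n /= mulr0 subrr mulr0.
have N0 : 0 < N by lra.
split.
  have key : (N - 1) * (N * rho ^+ 2 + 3 * A) <= N * (N * A - B ^+ 2).
    nra.
  have -> : (N - 1) * (rho ^+ 2 + 3 / N * A) =
            N^-1 * ((N - 1) * (N * rho ^+ 2 + 3 * A)) by field; rewrite ?mulf_neq0 ?lt0r_neq0 // ?pnatr_eq0.
  have -> : N * A - B ^+ 2 = N^-1 * (N * (N * A - B ^+ 2)) by field; rewrite ?mulf_neq0 ?lt0r_neq0 // ?pnatr_eq0.
  by apply: ler_wpM2l => //; rewrite invr_ge0 ltW.
have key : 2 * N * (N * A - B ^+ 2) <= (N ^+ 2 - 3 * N + 4) * (N * rho ^+ 2 + 3 * A).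
  have B0 : 0 <= B ^+ 2 by apply: sqr_ge0.
  have r2 : 0 <= N * rho ^+ 2 by apply: mulr_ge0; [lra | apply: sqr_ge0].
  have t3 : 0 <= N * B ^+ 2 by apply: mulr_ge0; [lra | apply: sqr_ge0].
  have t1 : 0 <= (N ^+ 2 - 3 * N + 4) * (N * rho ^+ 2).
    by apply: mulr_ge0 => //; nra.
  have [c0|c0] := lerP 0 (N ^+ 2 - 9 * N + 12).
    have t2 : 0 <= (N ^+ 2 - 9 * N + 12) * A by apply: mulr_ge0.
    nra.
  have t2 : 0 <= (N ^+ 2 - 9 * N + 12) * (A - N * rho ^+ 2).
    by apply: mulr_le0 ; lra.
  have t4 : 0 <= (N - 2) * (N - 4) * (N * rho ^+ 2).
    by apply: mulr_ge0 => //; apply: mulr_ge0; lra.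
  nra.
have -> : (N ^+ 2 - 3 * N + 4) / 2 * (rho ^+ 2 + 3 / N * A) =
          (2 * N)^-1 * ((N ^+ 2 - 3 * N + 4) * (N * rho ^+ 2 + 3 * A)) by field; rewrite ?mulf_neq0 ?lt0r_neq0 // ?pnatr_eq0.
have -> : N * A - B ^+ 2 = (2 * N)^-1 * (2 * N * (N * A - B ^+ 2)) by field; rewrite ?mulf_neq0 ?lt0r_neq0 // ?pnatr_eq0.
by apply: ler_wpM2l => //; rewrite invr_ge0 ltW // mulr_gt0.
Qed.

End Ineq.

Section G.
Variables (R : realType) (n m : nat) (pe qe : 'I_m -> 'I_n) (L : 'I_m -> R).

Definition wv k (i : 'I_n) : R := (pe k == i)%:R - (qe k == i)%:R.
Definition dlt (f : 'I_n -> R) k := f (pe k) - f (qe k).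

Lemma sum_ind (a : 'I_n) (f : 'I_n -> R) : \sum_i (a == i)%:R * f i = f a.
Proof.
rewrite (bigD1 a) //= eqxx mul1r big1 ?addr0 // => i /negPf; rewrite eq_sym => ->.
by rewrite mul0r.
Qed.

Lemma sum_wv k f : \sum_i wv k i * f i = dlt f k.
Proof.
rewrite /wv /dlt; under eq_bigr do rewrite mulrBl.
by rewrite sumrB !sum_ind.
Qed.

Lemma sum_wvr k f : \sum_i f i * wv k i = dlt f k.
Proof. by rewrite -sum_wv; apply: eq_bigr => i _; rewrite mulrC. Qed.

Definition lapf keep (f : 'I_n -> R) i := \sum_j laplacian pe qe L keep i j * f j.

Lemma lapfE keep f i :
  lapf keep f i = \sum_(k | keep k) (L k)^-1 * wv k i * dlt f k.
Proof.
rewrite /lapf.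
under eq_bigr do rewrite mxE big_distrl /=.
rewrite exchange_big /=; apply: eq_bigr => k _.
rewrite -sum_wv big_distrr /=; apply: eq_bigr => j _.
rewrite /wv; ring.
Qed.

Definition Qf keep (f g : 'I_n -> R) :=
  \sum_(k | keep k) (L k)^-1 * dlt f k * dlt g k.

Lemma sum_lapf keep f g : \sum_i g i * lapf keep f i = Qf keep f g.
Proof.
under eq_bigr do rewrite lapfE big_distrr /=.
rewrite exchange_big /=; apply: eq_bigr => k _.
rewrite -(sum_wvr k g) big_distrr /=; apply: eq_bigr => i _; ring.
Qed.

Lemma QfC keep f g : Qf keep f g = Qf keep g f.
Proof. by apply: eq_bigr => k _; ring. Qed.


Lemma connect_inv (T : finType) (e : rel T) (P : T -> Prop) :
  (forall x y, P x -> e x y -> P y) -> forall x y, connect e x y -> P x -> P y.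
Proof.
move=> H x y /connectP [p]; elim: p x => [|z p IH] x /=.
  by move=> _ ->.
by move=> /andP [exz pp] ly Px; exact: IH pp ly (H _ _ Px exz).
Qed.

Lemma adjG_sym keep : symmetric (adjG pe qe keep).
Proof.
move=> x y; apply/existsP/existsP => -[k /andP [kk H]]; exists k;
  by rewrite kk /= orbC.
Qed.

Lemma lap_sym keep i j :
  laplacian pe qe L keep i j = laplacian pe qe L keep j i.
Proof. rewrite !mxE; apply: eq_bigr => k _; ring. Qed.

Lemma edges_const keep (f : 'I_n -> R) :
  connectedG pe qe keep -> (forall k, keep k -> f (pe k) = f (qe k)) ->
  forall x y, f x = f y.
Proof.
move=> /forallP Hc Hk x y.
have := forallP (Hc x) y.
move/(connect_inv (P := fun y => f x = f y)); apply => //.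
move=> a b -> /existsP [k /andP [kk /orP [] /andP [/eqP <- /eqP <-]]];
  by rewrite Hk.
Qed.

Lemma Qf_ge0 keep f : (forall k, 0 < L k) -> 0 <= Qf keep f f.
Proof.
move=> Lp; apply: sumr_ge0 => k _.
by rewrite -mulrA; apply: mulr_ge0; [rewrite invr_ge0 ltW | rewrite -expr2 sqr_ge0].
Qed.

Lemma Qf_eq0 keep f : (forall k, 0 < L k) -> Qf keep f f = 0 ->
  forall k, keep k -> f (pe k) = f (qe k).
Proof.
move=> Lp H0 k kk.
have Hn : forall i, keep i -> 0 <= (L i)^-1 * dlt f i * dlt f i.
  move=> i _.
  by rewrite -mulrA; apply: mulr_ge0; [rewrite invr_ge0 ltW | rewrite -expr2 sqr_ge0].
have := psumr_eq0P Hn H0 kk.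
rewrite -mulrA => /eqP; rewrite mulf_eq0 invr_eq0 gt_eqF //= -expr2 sqrf_eq0.
by rewrite subr_eq0 => /eqP.
Qed.

Lemma kernel_const keep f : (forall k, 0 < L k) -> connectedG pe qe keep ->
  (forall i, lapf keep f i = 0) -> forall x y, f x = f y.
Proof.
move=> Lp Hc H; apply: (edges_const Hc) => k kk; apply: (Qf_eq0 (keep := keep) Lp _ kk).
by rewrite -sum_lapf big1 // => i _; rewrite H mulr0.
Qed.

Lemma connected_unit keep z : (forall k, 0 < L k) -> connectedG pe qe keep ->
  grounded_lap pe qe L keep z \in unitmx.
Proof.
move=> Lp Hc; rewrite -row_free_unit; apply: inj_row_free => v Hv.
pose f := fun i => v ord0 i.
have Hj j : \sum_i f i * grounded_lap pe qe L keep z i j = 0.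
  by have := congr1 (fun M : 'rV_n => M ord0 j) Hv; rewrite !mxE.
have fz : f z = 0.
  have := Hj z; under eq_bigr do rewrite mxE eqxx orbT.
  by rewrite (bigD1 z) //= eqxx mulr1 big1 ?addr0 // => i /negPf ->; rewrite mulr0.
have Hl j : j != z -> lapf keep f j = 0.
  move=> jz; rewrite -(Hj j) /lapf; apply: eq_bigr => i _.
  rewrite [in RHS]mxE (negPf jz) orbF lap_sym; case: eqP => [->|_]; first by rewrite fz !mulr0 mul0r.
  by rewrite mulrC.
have Kc : forall x y, f x = f y.
  apply: (edges_const Hc) => k kk; apply: (Qf_eq0 (keep := keep) Lp _ kk).
  rewrite -sum_lapf big1 // => i _; case: (eqVneq i z) => [->|iz].
    by rewrite fz mul0r.
  by rewrite Hl // mulr0.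
apply/rowP => i; rewrite mxE.
by have := Kc i z; rewrite fz.
Qed.


Definition vf keep z y : 'I_n -> R := fun i => voltage pe qe L keep z y i ord0.

Lemma sum_lapf0 keep f : \sum_i lapf keep f i = 0.
Proof.
have := sum_lapf keep f (fun _ => 1); under eq_bigr do rewrite mul1r.
by move=> ->; rewrite /Qf big1 // => k _; rewrite /dlt subrr mulr0.
Qed.

Lemma Gz_row keep z (u : 'I_n -> R) :
  \sum_j grounded_lap pe qe L keep z z j * u j = u z.
Proof.
rewrite -(sum_ind z u); apply: eq_bigr => j _; by rewrite mxE eqxx.
Qed.

Lemma vf_z keep z y : vf keep z y z = 0.
Proof.
rewrite /vf /voltage.
set G := grounded_lap pe qe L keep z.
set b := (\col_i ((i != z) && (i == y))%:R : 'cV_n).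
have bz : b z ord0 = 0 by rewrite mxE eqxx.
case: (boolP (G \in unitmx)) => Hu.
  have := congr1 (fun M : 'cV_n => M z ord0) (mulKVmx Hu b).
  rewrite mxE => H; rewrite -bz -H; apply/esym.
  exact: (Gz_row keep z (fun j => (invmx G *m b) j ord0)).
rewrite (invmx_out Hu) mxE.
rewrite (Gz_row keep z (fun j => b j ord0)) //.
Qed.

Lemma vf_lap keep z y : (forall k, 0 < L k) -> connectedG pe qe keep ->
  forall i, lapf keep (vf keep z y) i = (i == y)%:R - (i == z)%:R.
Proof.
move=> Lp Hc.
have Hu := connected_unit z Lp Hc.
pose phi := vf keep z y.
have Hrow i : \sum_j grounded_lap pe qe L keep z i j * phi j =
              ((i != z) && (i == y))%:R.
  have := congr1 (fun M : 'cV_n => M i ord0)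
     (mulKVmx Hu (\col_i ((i != z) && (i == y))%:R : 'cV_n)).
  by rewrite !mxE.
have Hne i : i != z -> lapf keep phi i = (i == y)%:R - (i == z)%:R.
  move=> iz.
  have -> : lapf keep phi i = \sum_j grounded_lap pe qe L keep z i j * phi j.
    rewrite /lapf; apply: eq_bigr => j _; rewrite [in RHS]mxE (negPf iz) /=.
    by case: eqP => [->|_]; rewrite /phi ?vf_z ?mulr0.
  by rewrite Hrow iz (negPf iz) subr0.
have Hsum : \sum_i (lapf keep phi i - ((i == y)%:R - (i == z)%:R)) = 0.
  rewrite sumrB sum_lapf0 sumrB.
  have S1 (a : 'I_n) : \sum_i ((i == a)%:R : R) = 1.
    rewrite -[RHS](sum_ind a (fun _ => 1)); apply: eq_bigr => i _; by rewrite mulr1 eq_sym.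
  by rewrite !S1 subrr subrr.
move=> i; move: (Hne i); case: (eqVneq i z) => [-> _|iz]; last by apply.
apply/eqP; rewrite -subr_eq0; apply/eqP.
move: Hsum; rewrite (bigD1 z) //= eqxx big1 ?addr0 // => j jz.
by rewrite Hne // subrr.
Qed.


Lemma term_ge0 (u : 'I_n -> R) y k :
  (forall i, u i <= u y) -> 0 <= wv k y * dlt u k.
Proof.
move=> H; rewrite /wv /dlt.
have [e1|n1] := eqVneq (pe k) y; have [e2|n2] := eqVneq (qe k) y;
  rewrite /= ?subrr ?mul0r ?subr0 ?mul1r ?sub0r ?mulN1r //.
- by rewrite e1 subr_ge0.
- by rewrite e2 oppr_ge0 subr_le0.
Qed.

Lemma maxp keep (u : 'I_n -> R) a b : (forall k, 0 < L k) ->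
  connectedG pe qe keep ->
  (forall i, lapf keep u i = (i == a)%:R - (i == b)%:R) ->
  forall x, u x <= u a.
Proof.
move=> Lp Hc Hl x.
case: (@arg_maxP _ _ _ a xpredT u isT) => x0 _ Hmax.
suff -> : u a = u x0 by apply: Hmax.
apply/eqP; apply/negP => /negP Hne.
have Cl : forall y y', u y = u x0 -> adjG pe qe keep y y' -> u y' = u x0.
  move=> y y' Py /existsP [k /andP [kk Hk]].
  have ya : y != a by apply: contraNneq Hne => <-; rewrite Py.
  have Hmy : forall i, u i <= u y by move=> i; rewrite Py; apply: Hmax.
  have Hn : forall k, keep k -> 0 <= (L k)^-1 * wv k y * dlt u k.
    move=> j _; rewrite -mulrA mulr_ge0 //; first by rewrite invr_ge0 ltW.
    exact: term_ge0.
  have H0 : \sum_(k | keep k) (L k)^-1 * wv k y * dlt u k = 0.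
    apply/eqP; rewrite eq_le sumr_ge0 // andbT -lapfE Hl (negPf ya) sub0r.
    by rewrite oppr_le0.
  have := psumr_eq0P Hn H0 kk.
  rewrite -mulrA => /eqP; rewrite mulf_eq0 invr_eq0 gt_eqF //= => /eqP Ht.
  move: Ht Hk; rewrite /wv /dlt.
  have [e1|n1] := eqVneq (pe k) y; have [e2|n2] := eqVneq (qe k) y;
    rewrite /= ?andbT ?andbF ?orbF ?subr0 ?mul1r ?sub0r ?mulN1r.
  - move=> _ /orP [/eqP <- | /eqP <-]; by [rewrite e2 | rewrite e1].
  - move=> /eqP; rewrite subr_eq0 => /eqP Huq /eqP <-.
    by rewrite -Huq e1.
  - move=> /eqP; rewrite oppr_eq0 subr_eq0 => /eqP Huq /eqP <-.
    by rewrite Huq e2.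
  - by [].
have := forallP (forallP Hc x0) a.
move/(connect_inv (P := fun y => u y = u x0)) => H.
by move: Hne; rewrite (H Cl erefl) eqxx.
Qed.


Lemma sum_indr (a : 'I_n) (f : 'I_n -> R) : \sum_i f i * (i == a)%:R = f a.
Proof. by rewrite -sum_ind; apply: eq_bigr => i _; rewrite mulrC eq_sym. Qed.

Lemma sum_lap_e keep f a b g :
  (forall i, lapf keep f i = (i == a)%:R - (i == b)%:R) ->
  Qf keep f g = g a - g b.
Proof.
move=> H; rewrite -sum_lapf; under eq_bigr do rewrite H mulrBr.
by rewrite sumrB !sum_indr.
Qed.

Lemma lapf_ext keep f g i : (forall j, f j = g j) -> lapf keep f i = lapf keep g i.
Proof. by move=> H; apply: eq_bigr => j _; rewrite H. Qed.

Lemma lapfB keep f g i :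
  lapf keep (fun j => f j - g j) i = lapf keep f i - lapf keep g i.
Proof. by rewrite /lapf -sumrB; apply: eq_bigr => j _; rewrite mulrBr. Qed.

Lemma lapfN keep f i :
  lapf keep (fun j => - f j) i = - lapf keep f i.
Proof. by rewrite /lapf -sumrN; apply: eq_bigr => j _; rewrite mulrN. Qed.

Lemma lapfD keep f g i :
  lapf keep (fun j => f j + g j) i = lapf keep f i + lapf keep g i.
Proof. by rewrite /lapf -big_split; apply: eq_bigr => j _; rewrite mulrDr. Qed.

Lemma lapfZ keep c f i :
  lapf keep (fun j => c * f j) i = c * lapf keep f i.
Proof. by rewrite /lapf big_distrr; apply: eq_bigr => j _; rewrite mulrCA. Qed.

Lemma lapf_split k f i :
  lapf (@allE m) f i = lapf (minus_edge k) f i + (L k)^-1 * wv k i * dlt f k.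
Proof.
rewrite !lapfE (bigD1 k) //= addrC; congr (_ + _).
Qed.

Lemma minus_conn k : connectedG pe qe (@allE m) ->
  connect (adjG pe qe (minus_edge k)) (pe k) (qe k) ->
  connectedG pe qe (minus_edge k).
Proof.
move=> Hc Hpq; apply/forallP => x; apply/forallP => y.
apply: (connect_sub _ (forallP (forallP Hc x) y)) => a b.
move=> /existsP [j /andP [_ H]].
case: (eqVneq j k) => [ejk|njk].
  move: H; rewrite ejk => /orP [] /andP [/eqP <- /eqP <-] //.
  by rewrite (sym_connect_sym (adjG_sym _)).
apply: connect1; apply/existsP; exists j; by rewrite /minus_edge njk.
Qed.

Lemma dlt_same keep f g : (forall k, 0 < L k) -> connectedG pe qe keep ->
  (forall i, lapf keep f i = lapf keep g i) -> forall k, keep k -> dlt f k = dlt g k.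
Proof.
move=> Lp Hc H k kk.
have Hk := kernel_const (f := fun j => f j - g j) Lp Hc.
have := Hk (fun i => etrans (lapfB _ _ _ _) (etrans (congr1 (fun t => t - lapf keep g i) (H i)) (subrr _))) (pe k) (qe k).
by rewrite /dlt => /eqP; rewrite -subr_eq0 => /eqP E; apply/eqP; rewrite -subr_eq0; apply/eqP; rewrite -E; ring.
Qed.

Lemma vf_zz keep z i : vf keep z z i = 0.
Proof.
rewrite /vf /voltage.
have -> : (\col_i ((i != z) && (i == z))%:R : 'cV[R]_n) = 0.
  by apply/colP => j; rewrite !mxE andNb.
by rewrite mulmx0 mxE.
Qed.


Section Gamma.
Variable z : 'I_n.
Definition Psi x := vf (@allE m) z x.
Definition F k x := dlt (Psi x) k.
Definition gk k x := F k x - (F k (pe k) + F k (qe k)) / 2.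
Definition rho k := (F k (pe k) - F k (qe k)) / 2.

Lemma allE_sum (G : 'I_m -> R) : \sum_(k | (@allE m) k) G k = \sum_k G k.
Proof. by []. Qed.

Variables (Lp : forall k, 0 < L k) (Hc : connectedG pe qe (@allE m)).

Lemma Psi_lap x i : lapf (@allE m) (Psi x) i = (i == x)%:R - (i == z)%:R.
Proof. exact: vf_lap. Qed.

Lemma Psi_sym x y : Psi x y = Psi y x.
Proof.
have := sum_lap_e (Psi y) (Psi_lap x); rewrite /Psi vf_z subr0 => <-.
have := sum_lap_e (Psi x) (Psi_lap y); rewrite /Psi vf_z subr0 => <-.
exact: QfC.
Qed.

Lemma Psi_at_z x : Psi x z = 0.
Proof. exact: vf_z. Qed.

Lemma Psi_zz i : Psi z i = 0.
Proof. exact: vf_zz. Qed.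

Lemma res_formula x y :
  resistance pe qe L (@allE m) x y = \sum_k (L k)^-1 * (F k x - F k y) ^+ 2.
Proof.
rewrite /resistance /jhat.
have Hl : forall i, lapf (@allE m) (vf (@allE m) y x) i = (i == x)%:R - (i == y)%:R.
  exact: vf_lap.
have := sum_lap_e (vf (@allE m) y x) Hl; rewrite vf_z subr0 /vf => <-.
rewrite /Qf; apply: eq_bigr => k _.
have -> : dlt (vf (@allE m) y x) k = F k x - F k y.
  rewrite (@dlt_same (@allE m) _ (fun i => Psi x i - Psi y i)) //.
    by rewrite /F /dlt; ring.
  move=> i; rewrite lapfB !Psi_lap Hl; ring.
by rewrite expr2 mulrA.
Qed.

Lemma F_lap k i : lapf (@allE m) (F k) i = (i == pe k)%:R - (i == qe k)%:R.
Proof.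
rewrite (@lapf_ext _ _ (fun x => Psi (pe k) x - Psi (qe k) x)).
  rewrite lapfB !Psi_lap; ring.
by move=> j; rewrite /F /dlt !(Psi_sym j).
Qed.

Lemma F_bounds k x : F k (qe k) <= F k x <= F k (pe k).
Proof.
apply/andP; split; last exact: (maxp Lp Hc (F_lap k)).
rewrite -lerN2.
apply: (@maxp (@allE m) (fun x => - F k x) (qe k) (pe k) Lp Hc).
move=> i; rewrite lapfN F_lap; ring.
Qed.

Lemma F_z k : F k z = 0.
Proof. by rewrite /F /dlt !Psi_zz subrr. Qed.

Lemma h_const x :
  \sum_k (L k)^-1 * gk k x ^+ 2 =
  \sum_k (L k)^-1 * ((F k (pe k) + F k (qe k)) / 2) ^+ 2.
Proof.
apply/eqP; rewrite -subr_eq0 -sumrB.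
pose d := fun i => Psi i i.
have Hd : forall k, dlt d k = F k (pe k) + F k (qe k).
  by move=> k; rewrite /d /F /dlt (Psi_sym (pe k) (qe k)); ring.
have E1 := sum_lap_e (Psi x) (Psi_lap x).
have E2 := sum_lap_e d (Psi_lap x).
have H0 : Qf (@allE m) (Psi x) (Psi x) - Qf (@allE m) (Psi x) d = 0.
  by rewrite E1 E2 /d Psi_zz Psi_at_z; ring.
apply/eqP; apply: (etrans _ H0); rewrite /Qf !allE_sum -sumrB; apply: eq_bigr => k _.
rewrite Hd /gk /F; field; exact: lt0r_neq0.
Qed.

Lemma wvE k i : wv k i = (i == pe k)%:R - (i == qe k)%:R.
Proof. by rewrite /wv !(eq_sym i). Qed.

Lemma yterm_loop p k : pe k = qe k ->
  yterm pe qe L p k = (L k)^-1 * (rho k ^+ 2 + 3 * gk k p ^+ 2).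
Proof.
move=> Eq.
have Hcm : connectedG pe qe (minus_edge k).
  by apply: (minus_conn Hc); rewrite Eq connect0.
have Fk x : F k x = 0 by rewrite /F /dlt Eq subrr.
rewrite /yterm Hcm /rho /gk !Fk.
have E1 : resistance pe qe L (minus_edge k) (pe k) (qe k) = 0.
  by rewrite /resistance /jhat Eq; exact: vf_zz.
have E2 : jhat pe qe L (minus_edge k) (pe k) p (qe k) = 0.
  by rewrite /jhat -Eq; exact: vf_zz.
have E3 : jhat pe qe L (minus_edge k) (qe k) p (pe k) = 0.
  by rewrite /jhat Eq; exact: vf_zz.
rewrite E1 E2 E3; rewrite !(expr0n, subrr, mulr0, mul0r, addr0) //.
Qed.

Lemma F_lapw k i : lapf (@allE m) (F k) i = wv k i.
Proof. by rewrite F_lap wvE. Qed.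

Lemma yterm_nb p k : pe k != qe k -> connectedG pe qe (minus_edge k) ->
  yterm pe qe L p k = (L k)^-1 * (rho k ^+ 2 + 3 * gk k p ^+ 2).
Proof.
move=> Nq Hcm.
pose a := vf (minus_edge k) (pe k) (qe k).
pose b := vf (minus_edge k) (qe k) (pe k).
have La i : lapf (minus_edge k) a i = (i == qe k)%:R - (i == pe k)%:R.
  exact: vf_lap.
have Lb i : lapf (minus_edge k) b i = (i == pe k)%:R - (i == qe k)%:R.
  exact: vf_lap.
have a0 : a (pe k) = 0 by exact: vf_z.
have b0 : b (qe k) = 0 by exact: vf_z.
set Rk := b (pe k).
have Rk0 : 0 <= Rk.
  by have := Qf_ge0 (minus_edge k) b Lp; rewrite (sum_lap_e b Lb) b0 subr0.
have ab x : a x + b x = Rk.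
  have := kernel_const (keep := minus_edge k) (f := fun x => a x + b x) Lp Hcm.
  move=> /(_ _ x (pe k)) ->; first by rewrite a0 add0r.
  by move=> i; rewrite lapfD La Lb; ring.
have aq : a (qe k) = Rk by rewrite -(ab (qe k)) b0 addr0.
pose psi x := b x - a x.
have Lk0 : 0 < L k := Lp k.
have LR : L k + Rk != 0 by apply: lt0r_neq0; apply: ltr_wpDr.
pose lam := L k / (2 * (L k + Rk)).
have Lpsi i : lapf (@allE m) psi i = (2 + 2 * Rk / L k) * wv k i.
  rewrite (lapf_split k) lapfB La Lb wvE /dlt /psi a0 b0 aq -/Rk; field.
  exact: lt0r_neq0.
have HF x : F k x = lam * psi x + (F k (pe k) - lam * psi (pe k)).
  have := kernel_const (keep := @allE m) (f := fun x => F k x - lam * psi x) Lp Hc.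
  move=> /(_ _ x (pe k)) => H.
  have -> : F k x = (F k x - lam * psi x) + lam * psi x by ring.
  rewrite H; first by ring.
  move=> i; rewrite lapfB lapfZ F_lapw Lpsi /lam; field.
  by rewrite LR lt0r_neq0.
have E1 : resistance pe qe L (minus_edge k) (pe k) (qe k) = Rk by [].
have E2 : jhat pe qe L (minus_edge k) (pe k) p (qe k) = a p by [].
have E3 : jhat pe qe L (minus_edge k) (qe k) p (pe k) = b p by [].
rewrite /yterm Hcm E1 E2 E3 /rho /gk (HF p) (HF (pe k)) (HF (qe k)).
have ppk : psi (pe k) = Rk by rewrite /psi a0 subr0.
have pqk : psi (qe k) = - Rk by rewrite /psi b0 aq sub0r.
rewrite ppk pqk /psi /lam; field.
by rewrite LR lt0r_neq0.
Qed.

Lemma yterm_br p k : ~~ connectedG pe qe (minus_edge k) ->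
  yterm pe qe L p k = (L k)^-1 * (rho k ^+ 2 + 3 * gk k p ^+ 2).
Proof.
move=> Hcm.
have Lk0 : 0 < L k := Lp k.
set e' := adjG pe qe (minus_edge k).
pose chi x : R := (connect e' (pe k) x)%:R.
have cq : connect e' (pe k) (qe k) = false.
  by apply/negP => H; move: Hcm; rewrite (minus_conn Hc H).
have Ledge j : j != k -> chi (pe j) = chi (qe j).
  move=> jk; rewrite /chi; congr (_%:R).
  have E : e' (pe j) (qe j) by apply/existsP; exists j; rewrite /minus_edge jk !eqxx.
  have H1 := connect1 E.
  have H2 : connect e' (qe j) (pe j) by apply: connect1; rewrite /e' adjG_sym.
  case: (boolP (connect e' (pe k) (pe j))) => C1.
    by rewrite (connect_trans C1 H1).
  case: (boolP (connect e' (pe k) (qe j))) => C2 //.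
  by move: C1; rewrite (connect_trans C2 H2).
have Lchi i : lapf (@allE m) chi i = (L k)^-1 * wv k i.
  rewrite (lapf_split k) lapfE big1 ?add0r.
    by rewrite /dlt /chi cq connect0 subr0 mulr1.
  by move=> j jk; rewrite /dlt Ledge // subrr mulr0.
have HF x : F k x = L k * chi x + (F k (pe k) - L k * chi (pe k)).
  have := kernel_const (keep := @allE m) (f := fun x => F k x - L k * chi x) Lp Hc.
  move=> /(_ _ x (pe k)) => H.
  have -> : F k x = (F k x - L k * chi x) + L k * chi x by ring.
  rewrite H; first by ring.
  move=> i; rewrite lapfB lapfZ F_lapw Lchi mulrA mulfV ?mul1r ?subrr //.
  exact: lt0r_neq0.
rewrite /yterm (negPf Hcm) /rho /gk (HF p) (HF (pe k)) (HF (qe k)).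
have c1 : chi (pe k) = 1 by rewrite /chi connect0.
have c2 : chi (qe k) = 0 by rewrite /chi cq.
rewrite c1 c2.
have : chi p = 0 \/ chi p = 1 by rewrite /chi; case: connect; [right | left].
case=> ->; field; exact: lt0r_neq0.
Qed.

Lemma yterm_eq p k :
  yterm pe qe L p k = (L k)^-1 * (rho k ^+ 2 + 3 * gk k p ^+ 2).
Proof.
case: (eqVneq (pe k) (qe k)) => [Eq|Nq]; first exact: yterm_loop.
case: (boolP (connectedG pe qe (minus_edge k))) => Hcm.
  exact: yterm_nb.
exact: yterm_br.
Qed.

Lemma gk_bounds k x : - rho k <= gk k x <= rho k.
Proof.
have := F_bounds k x; case/andP => h1 h2.
apply/andP; split; rewrite /gk /rho; lra.
Qed.

Lemma gk_ends k :
  (pe k != qe k /\ gk k (pe k) = rho k /\ gk k (qe k) = - rho k) \/ rho k = 0.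
Proof.
case: (eqVneq (pe k) (qe k)) => [E|N].
  by right; rewrite /rho E subrr mul0r.
by left; split => //; split; rewrite /gk /rho; field.
Qed.

Lemma Kf_eq : Kf pe qe L =
  \sum_k (L k)^-1 * (n%:R * \sum_x gk k x ^+ 2 - (\sum_x gk k x) ^+ 2).
Proof.
rewrite /Kf.
have E : \sum_x \sum_y resistance pe qe L (@allE m) x y =
         \sum_k (L k)^-1 * \sum_x \sum_y (gk k x - gk k y) ^+ 2.
  under eq_bigr => x _ do under eq_bigr => y _ do rewrite res_formula.
  under eq_bigr => x _ do rewrite exchange_big /=.
  rewrite exchange_big /=; apply: eq_bigr => k _.
  rewrite big_distrr /=; apply: eq_bigr => x _.
  rewrite big_distrr /=; apply: eq_bigr => y _.
  by rewrite /gk; congr (_ * _ ^+ 2); ring.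
rewrite E big_distrr /=; apply: eq_bigr => k _.
by rewrite pair_sum; field; exact: lt0r_neq0.
Qed.

Lemma yG_eq p : yG pe qe L p =
  \sum_k (L k)^-1 * (rho k ^+ 2 + 3 / n%:R * \sum_x gk k x ^+ 2).
Proof.
have n0 : (0 < n)%N by case: n p => [[]|].
have N0 : (n%:R : R) != 0 by rewrite pnatr_eq0 -lt0n.
rewrite /yG; under eq_bigr do rewrite yterm_eq.
have Hp : \sum_k (L k)^-1 * gk k p ^+ 2 =
          n%:R^-1 * \sum_k (L k)^-1 * \sum_x gk k x ^+ 2.
  have -> : \sum_k (L k)^-1 * \sum_x gk k x ^+ 2 =
            \sum_x \sum_k (L k)^-1 * gk k x ^+ 2.
    rewrite exchange_big /=; apply: eq_bigr => k _; by rewrite big_distrr.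
  under [in RHS]eq_bigr => x _ do rewrite (h_const x) -(h_const p).
  by rewrite sumr_const card_ord -[X in _ = _ * X]mulr_natl mulrA mulVf // mul1r.
have -> : \sum_k (L k)^-1 * (rho k ^+ 2 + 3 * gk k p ^+ 2) =
    \sum_k (L k)^-1 * rho k ^+ 2 + 3 * \sum_k (L k)^-1 * gk k p ^+ 2.
  rewrite big_distrr -big_split /=; apply: eq_bigr => k _; ring.
rewrite Hp.
have -> : \sum_k (L k)^-1 * (rho k ^+ 2 + 3 / n%:R * \sum_x gk k x ^+ 2) =
    \sum_k (L k)^-1 * rho k ^+ 2 + 3 / n%:R * \sum_k (L k)^-1 * \sum_x gk k x ^+ 2.
  rewrite big_distrr -big_split /=; apply: eq_bigr => k _; ring.
ring.
Qed.

End Gamma.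





End G.

Unset Implicit Arguments.

Theorem proposition3p17 (R : realType) (n m : nat)
    (pe qe : 'I_m -> 'I_n) (L : 'I_m -> R) :
  (forall k, 0 < L k) ->
  connectedG pe qe (@allE m) ->
  (4 <= n)%N ->
  forall p : 'I_n,
    (n%:R - 1) * yG pe qe L p <= Kf pe qe L /\
    Kf pe qe L <= (n%:R ^+ 2 - 3 * n%:R + 4) / 2 * yG pe qe L p.
Proof.
move=> Lp Hc n4 p.
rewrite (Kf_eq p Lp Hc) (yG_eq p Lp Hc p).
have Li k : 0 <= (L k)^-1 by rewrite invr_ge0 ltW.
have EI k := edge_ineq n4 (gk_bounds p Lp Hc k) (gk_ends pe qe L p k).
split.
  rewrite mulr_sumr; apply: ler_sum => k _; rewrite mulrCA.
  by apply: ler_wpM2l => //; case: (EI k).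
rewrite mulr_sumr; apply: ler_sum => k _; rewrite mulrCA.
by apply: ler_wpM2l => //; case: (EI k).
Qed.
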